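(* Let $a,b,c$ be nonnegative integers with $a+b+c=n$ and suppose $\gcd(a+b,b+c)=1$. Then in the meander graph $M=M(a,b,c\mid n)$ there are exactly two vertices of degree $1$, and every other vertex has degree $2$.
   Context: For compositions $\underline x=(a_1,\ldots,a_m)$, $\underline y=(b_1,\ldots,b_t)$ of $n$ (nonnegative integers summing to $n$), the meander $M(\underline x\mid\underline y)$ is the graph on vertices $1,\ldots,n$ whose edges are: for each part $a_k$ with $s=a_1+\cdots+a_{k-1}$, the top edges $\{s+j,\,s+a_k+1-j\}$ for $1\le j\le\lfloor a_k/2\rfloor$; and for each part $b_k$ with $s=b_1+\cdots+b_{k-1}$, the bottom edges $\{s+j,\,s+b_k+1-j\}$ for $1\le j\le\lfloor b_k/2\rfloor$. Here $\underline x=(a,b,c)$ and $\underline y=(n)$. *)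

(* Defs.v *)
From mathcomp Require Import all_boot.
Set Implicit Arguments. Unset Strict Implicit. Unset Printing Implicit Defensive.

Definition part_edges (s a : nat) : seq (nat * nat) :=
  [seq (s + j, s + a + 1 - j) | j <- iota 1 a./2].

Fixpoint comp_edges (s : nat) (x : seq nat) : seq (nat * nat) :=
  match x with
  | [::] => [::]
  | a :: x' => part_edges s a ++ comp_edges (s + a) x'
  end.

(* The meander M(x | y) as a (multi)list of edges on vertices 1..n:
   top edges from x, bottom edges from y. *)
Definition meander (x y : seq nat) : seq (nat * nat) :=
  comp_edges 0 x ++ comp_edges 0 y.

Definition degree (E : seq (nat * nat)) (v : nat) : nat :=
  count (fun e => e.1 == v) E + count (fun e => e.2 == v) E.

(* Main.v *)
Require Import Defs.
From mathcomp Require Import all_boot zify.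

Lemma cnt_iota (P : pred nat) t k :
  {in iota 1 k, P =1 pred1 t} -> count P (iota 1 k) = (0 < t < k.+1).
Proof.
move=> H; rewrite (eq_in_count H) count_uniq_mem ?iota_uniq // mem_iota.
by case: t {H} => [|t] //=; rewrite add1n.
Qed.

Lemma pe1 s a v : count (fun e => e.1 == v) (part_edges s a) = ((s < v) && (v <= s + a./2)).
Proof.
rewrite /part_edges count_map.
case: (ltnP s v) => Hsv /=.
  rewrite (@cnt_iota _ (v - s)); first by lia.
  move=> j _ /=; apply/eqP/eqP; lia.
rewrite (@cnt_iota _ 0) //.
move=> j; rewrite mem_iota => Hj /=; apply/eqP/eqP; lia.
Qed.

Lemma pe2 s a v : count (fun e => e.2 == v) (part_edges s a) = ((v <= s + a) && (s + a - a./2 < v)).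
Proof.
rewrite /part_edges count_map.
case: (leqP v (s + a)) => Hsv /=.
  rewrite (@cnt_iota _ (s + a + 1 - v)); first by lia.
  move=> j; rewrite mem_iota => Hj /=; apply/eqP/eqP; lia.
rewrite (@cnt_iota _ 0) //.
move=> j; rewrite mem_iota => Hj /=; apply/eqP/eqP; lia.
Qed.

Definition P s a h v : nat := ((s < v) && (v <= s + h)) + ((v <= s + a) && (s + a - h < v)).

Definition D a b c n ha hb hc hn v : nat :=
  P 0 a ha v + P a b hb v + P (a + b) c hc v + P 0 n hn v.

Lemma degE a b c n v : degree (meander [:: a; b; c] [:: n]) v = D a b c n a./2 b./2 c./2 n./2 v.
Proof.
rewrite /degree /meander /D /P /= !cats0 !count_cat !pe1 !pe2 !add0n.
lia.
Qed.

Lemma partE s a h v : odd a + h.*2 = a ->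
  P s a h v = (s < v <= s + a) && ~~ (odd a && (v == s + h + 1)).
Proof.
rewrite /P; case: (odd a) => /= Ha.
  apply/eqP; case: (v =P s + h + 1) => E /=; lia.
rewrite andbT; lia.
Qed.

Lemma cnt2 n m1 m2 (P : pred nat) : 0 < m1 <= n -> 0 < m2 <= n -> m1 != m2 ->
  {in iota 1 n, P =1 predU (pred1 m1) (pred1 m2)} -> count P (iota 1 n) = 2.
Proof.
move=> H1 H2 H12 H; rewrite (eq_in_count H).
have := count_predUI (pred1 m1) (pred1 m2) (iota 1 n).
rewrite !count_uniq_mem ?iota_uniq // !mem_iota.
have -> : count (predI (pred1 m1) (pred1 m2)) (iota 1 n) = 0.
  apply/eqP; rewrite eqn0Ngt -has_count; apply/hasPn => x _ /=.
  by apply/andP => -[/eqP -> /eqP E]; rewrite E eqxx in H12.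
rewrite addn0 => ->; lia.
Qed.

Lemma core a b c ha hb hc hn :
  let n := a + b + c in
  1 < n ->
  ~ ((odd (a + b) = false) /\ (odd (b + c) = false)) ->
  (a + b = 0 -> b + c = 1) -> (b + c = 0 -> a + b = 1) -> (a = c -> a + b = 1) ->
  odd a + ha.*2 = a -> odd b + hb.*2 = b -> odd c + hc.*2 = c -> odd n + hn.*2 = n ->
  count (fun v => D a b c n ha hb hc hn v == 1) (iota 1 n) = 2 /\
  (forall v, 1 <= v <= n -> D a b c n ha hb hc hn v != 1 -> D a b c n ha hb hc hn v = 2).
Proof.
move=> n Hn1 G1 G2 G3 G4 Da Db Dc Dn.
have DE v : D a b c n ha hb hc hn v =
  ((0 < v <= 0 + a) && ~~ (odd a && (v == 0 + ha + 1))) +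
  ((a < v <= a + b) && ~~ (odd b && (v == a + hb + 1))) +
  ((a + b < v <= a + b + c) && ~~ (odd c && (v == a + b + hc + 1))) +
  ((0 < v <= 0 + n) && ~~ (odd n && (v == 0 + hn + 1))).
  by rewrite /D !partE.
rewrite /n !oddD in G1 Dn DE *.
have [oa|/negPf oa] := boolP (odd a); have [ob|/negPf ob] := boolP (odd b); have [oc|/negPf oc] := boolP (odd c);
  rewrite ?oa ?ob ?oc /= in G1 Da Db Dc Dn DE.
- by exfalso; apply: G1.
- clear G1 G2 G3 G4; split; last by move=> v Hv; rewrite DE; lia.
  apply (@cnt2 _ (ha.+1) ((a + hb).+1)); try lia.
  by move=> v; rewrite mem_iota => Hv /=; rewrite DE; lia.
- clear G1 G2 G3 G4; split; last by move=> v Hv; rewrite DE; lia.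
  apply (@cnt2 _ (ha.+1) ((a + b + hc).+1)); try lia.
  by move=> v; rewrite mem_iota => Hv /=; rewrite DE; lia.
- clear G1 G2 G4; split; last by move=> v Hv; rewrite DE; lia.
  apply (@cnt2 _ (ha.+1) (hn.+1)); try lia.
  by move=> v; rewrite mem_iota => Hv /=; rewrite DE; lia.
- clear G1 G2 G3 G4; split; last by move=> v Hv; rewrite DE; lia.
  apply (@cnt2 _ ((a + hb).+1) ((a + b + hc).+1)); try lia.
  by move=> v; rewrite mem_iota => Hv /=; rewrite DE; lia.
- clear G1 G2 G3; split; last by move=> v Hv; rewrite DE; lia.
  apply (@cnt2 _ ((a + hb).+1) (hn.+1)); try lia.
  by move=> v; rewrite mem_iota => Hv /=; rewrite DE; lia.
- clear G1 G3 G4; split; last by move=> v Hv; rewrite DE; lia.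
  apply (@cnt2 _ ((a + b + hc).+1) (hn.+1)); try lia.
  by move=> v; rewrite mem_iota => Hv /=; rewrite DE; lia.
- by exfalso; apply: G1.
Qed.

Theorem lemma4p11 (a b c n : nat) :
  a + b + c = n -> 1 < n -> gcdn (a + b) (b + c) = 1 ->
  count (fun v => degree (meander [:: a; b; c] [:: n]) v == 1) (iota 1 n) = 2 /\
  (forall v, 1 <= v <= n ->
     degree (meander [:: a; b; c] [:: n]) v != 1 ->
     degree (meander [:: a; b; c] [:: n]) v = 2).
Proof.
move=> Hn Hn1 Hg.
have G1 : ~ ((odd (a + b) = false) /\ (odd (b + c) = false)).
  move=> [o1 o2]; have : 2 %| gcdn (a + b) (b + c).
    by rewrite dvdn_gcd dvdn2 o1 dvdn2 o2.
  by rewrite Hg.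
have G2 : a + b = 0 -> b + c = 1 by move=> E; rewrite E gcd0n in Hg.
have G3 : b + c = 0 -> a + b = 1 by move=> E; rewrite E gcdn0 in Hg.
have G4 : a = c -> a + b = 1.
  by move=> E; subst a; rewrite [c + b]addnC gcdnn in Hg; rewrite addnC.
subst n.
have [C1 C2] := @core a b c (a./2) (b./2) (c./2) ((a + b + c)./2) Hn1 G1 G2 G3 G4
  (odd_double_half a) (odd_double_half b) (odd_double_half c) (odd_double_half (a + b + c)).
split.
  rewrite -C1; apply: eq_count => v /=; by rewrite degE.
by move=> v Hv; rewrite !degE; exact: C2.
Qed.
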